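(* Let $W_{-1}$ be the $2\pi$-periodic function given on $[-\pi,\pi]$ by $W_{-1}(x)=|\sin x|\sin^2(x/2)$ for $|x|\le\frac{2\pi}{3}$ and $W_{-1}(x)=\frac{3\sqrt3}{8}$ for $\frac{2\pi}3\le|x|\le\pi$. For any $\theta\in(0,1)$, if $\delta^*>0$ is small enough, then for any $x^*\in(-\delta^*,\delta^* )$ there exists a positive function $\widetilde W_\theta\in W^{1,\infty}(\mathbb R)$ with $\sin(x)\widetilde W_\theta'(x)\ge0$ on $\mathbb R$ such that for every function $f$ on $[-\pi-x^*,\pi-x^*]$ (with the right-hand side finite), $$\Big\|\frac{\sin(x)\int_0^xf(\bar x)\,d\bar x}{W_{-1}\widetilde W_\theta}\Big\|_{L^\infty([-\pi-x^*,\pi-x^*])}\le\theta\Big\|\frac{f}{W_{-1}\widetilde W_\theta}\Big\|_{L^\infty([-\pi-x^*,\pi-x^*])}.$$ *)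

(* Defs.v *)
From HB Require Import structures.
From mathcomp Require Import all_boot all_order all_algebra.
From mathcomp Require Import all_classical all_reals all_analysis.
Set Implicit Arguments. Unset Strict Implicit. Unset Printing Implicit Defensive.
Import Order.TTheory GRing.Theory Num.Theory.
Import numFieldNormedType.Exports.
Local Open Scope classical_set_scope.
Local Open Scope ring_scope.

Section Defs.
Variable R : realType.

Definition Wm1_base (x : R) : R :=
  if `|x| <= 2 * pi / 3 then `|sin x| * (sin (x / 2)) ^+ 2
  else 3 * Num.sqrt 3 / 8.

Definition red2pi (x : R) : R :=
  x - 2 * pi * (Num.floor ((x + pi) / (2 * pi)))%:~R.

Definition Wm1 (x : R) : R := Wm1_base (red2pi x).

Definition int0 (f : R -> R) (x : R) : R :=
  if 0 <= x then Rintegral lebesgue_measure `[0, x] f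
  else - Rintegral lebesgue_measure `[x, 0] f.

(* W^{1,oo}(R): bounded and Lipschitz *)
Definition W1inf (g : R -> R) : Prop :=
  (exists B : R, forall x, `|g x| <= B) /\
  (exists C : R, forall x y, `|g x - g y| <= C * `|x - y|).
End Defs.

(* Main.v *)
Require Import Defs.
From HB Require Import structures.
From mathcomp Require Import all_boot all_order all_algebra.
From mathcomp Require Import all_classical all_reals all_analysis.
From mathcomp Require Import lra ring.
Import Order.TTheory GRing.Theory Num.Theory.
Import numFieldNormedType.Exports.
Local Open Scope classical_set_scope.
Local Open Scope ring_scope.
Set Implicit Arguments. Unset Strict Implicit.

Section T.
Variable R : realType.
Implicit Types x y t : R.

Lemma lip (f df : R -> R) (L : R) :
  (forall t : R, is_derive t (1:R) f (df t)) -> (forall t, `|df t| <= L) ->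
  forall x y, `|f x - f y| <= L * `|x - y|.
Proof.
move=> dF bd.
have key x y : x <= y -> `|f x - f y| <= L * `|x - y|.
  move=> xy.
  have dv t : derivable f t 1 by case: (dF t).
  have cf : continuous f.
    by move=> t; apply/differentiable_continuous/derivable1_diffP/dv.
  have [c _ E] := MVT_segment xy (fun t _ => dF t) (continuous_subspaceT cf).
  rewrite distrC E normrM (distrC x y).
  by apply: ler_wpM2r => //.
move=> x y; have [xy|yx] := leP x y; first exact: key.
by rewrite distrC (distrC x); apply: key; exact: ltW.
Qed.

Lemma sin_lip x y : `|sin x - sin y| <= `|x - y|.
Proof.
rewrite -[X in _ <= X]mul1r; apply: (@lip sin cos) => t.
exact: cos_max.
Qed.

Lemma pi_le4 : pi <= 4 :> R.
Proof. have := @pihalf_lt2 R; lra. Qed.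

Lemma pi_ge2' : 2 <= pi :> R.
Proof. exact: pi_ge2. Qed.

Lemma sin_piB x : sin (pi - x) = sin x.
Proof. rewrite sinB sinpi cospi; lra. Qed.

Lemma sin_le_mono x y : 0 <= x -> x <= y -> y <= pi / 2 -> sin x <= sin y.
Proof.
move=> x0 xy ypi.
have pi0 := @pi_gt0 R.
case: (eqVneq x y) => [->//|nxy].
have xy' : x < y by rewrite lt_neqAle nxy.
apply: ltW; rewrite ltr_sin// in_itv/=; apply/andP; split; lra.
Qed.

Definition cc : R := 3 * Num.sqrt 3 / 8.

Lemma cc_bounds : 1/2 <= cc <= 1.
Proof.
have s0 : 0 <= Num.sqrt (3:R) by apply: sqrtr_ge0.
have s3 : Num.sqrt (3:R) ^+ 2 = 3 by rewrite sqr_sqrtr.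
rewrite /cc; apply/andP; split; nra.
Qed.

Lemma base_small y : `|y| <= 2 * pi / 3 -> Wm1_base y = `|sin y| * (sin (y / 2)) ^+ 2.
Proof. by move=> h; rewrite /Wm1_base h. Qed.

Lemma base_big y : 2 * pi / 3 < `|y| -> Wm1_base y = cc.
Proof. by move=> h; rewrite /Wm1_base leNgt h. Qed.

Lemma base_even y : Wm1_base (- y) = Wm1_base y.
Proof. by rewrite /Wm1_base normrN sinN normrN mulNr sinN sqrrN. Qed.

Lemma base_le1 y : Wm1_base y <= 1.
Proof.
rewrite /Wm1_base; case: ifP => _; last by have /andP[] := cc_bounds.
have := sin_max y; have := sin_le1 (y/2); have := sin_geN1 (y/2).
have := normr_ge0 (sin y); nra.
Qed.

Lemma base_pos0 y : 0 < y <= pi -> 0 < Wm1_base y.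
Proof.
move=> /andP[y0 ypi]; have pi2 := pi_ge2'.
rewrite /Wm1_base; case: ifP => [h|_]; last by have := cc_bounds; rewrite /cc => /andP[]; lra.
have h' : y <= 2 * pi / 3 by rewrite -(ger0_norm (ltW y0)).
have s1 : 0 < sin y by apply: sin_gt0_pi; apply/andP; split; lra.
have s2 : 0 < sin (y / 2) by apply: sin_gt0_pi; apply/andP; split; lra.
rewrite gtr0_norm //; apply: mulr_gt0 => //; exact: exprn_gt0.
Qed.

Lemma base_pos y : y != 0 -> `|y| <= pi -> 0 < Wm1_base y.
Proof.
move=> y0 ypi; case: (ltgtP y 0) y0 ypi => // yneg _.
  by rewrite ltr0_norm // -base_even => h; apply: base_pos0; apply/andP; split; lra.
by rewrite gtr0_norm // => h; apply: base_pos0; apply/andP; split.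
Qed.

Lemma base_ge0 y : 0 <= Wm1_base y.
Proof.
rewrite /Wm1_base; case: ifP => _; last by have := cc_bounds; rewrite /cc => /andP[]; lra.
by apply: mulr_ge0 => //; exact: sqr_ge0.
Qed.

Definition beta x : R := if x <= 2 * pi / 3 then sin (x / 2) ^+ 2 else (sin x)^-1.

Lemma beta_ge0 x : 0 < x < pi -> 0 <= beta x.
Proof.
move=> /andP[x0 xpi]; rewrite /beta; case: ifP => _; first exact: sqr_ge0.
by rewrite invr_ge0; apply: ltW; apply: sin_gt0_pi; apply/andP.
Qed.

Lemma core1 x t : 0 < x < pi -> 0 <= t <= x -> Wm1_base t <= beta x * sin t.
Proof.
move=> /andP[x0 xpi] /andP[t0 tx]; have pi2 := pi_ge2'.
have sx : 0 < sin x by apply: sin_gt0_pi; apply/andP.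
have sx1 : sin x <= 1 by exact: sin_le1.
have st : 0 <= sin t by apply: sin_ge0_pi; apply/andP; split; lra.
have [ht|ht] := leP t (2 * pi / 3).
  rewrite base_small ?ger0_norm //.
  have st2 : 0 <= sin (t / 2) by apply: sin_ge0_pi; apply/andP; split; lra.
  suff: sin (t / 2) ^+ 2 <= beta x by nra.
  rewrite /beta; case: ifP => hx.
    have : sin (t / 2) <= sin (x / 2) by apply: sin_le_mono; lra.
    nra.
  have : 1 <= (sin x)^-1 by rewrite invf_ge1.
  have := sin_le1 (t / 2); nra.
have hx : 2 * pi / 3 < x by lra.
rewrite base_big ?gtr0_norm; [|lra|lra].
rewrite /beta ifN; last by rewrite -ltNge.
have : sin x <= sin t.
  rewrite -sin_piB -(sin_piB t); apply: sin_le_mono; lra.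
have := cc_bounds; move=> /andP[_ c1] h.
rewrite ler_pdivlMl //; nra.
Qed.

Lemma core2 x : 0 < x < pi -> sin x * beta x <= 2 * Wm1_base x.
Proof.
move=> /andP[x0 xpi]; have pi2 := pi_ge2'.
have sx : 0 < sin x by apply: sin_gt0_pi; apply/andP.
rewrite /beta; case: ifP => hx.
  rewrite base_small ?ger0_norm ?(ltW sx) ?(ltW x0) //.
  have := sqr_ge0 (sin (x / 2)); nra.
rewrite base_big ?gtr0_norm //; last by rewrite ltNge hx.
rewrite divff ?gt_eqF //; have /andP[] := cc_bounds; lra.
Qed.

Lemma red_gen x (m : int) : m%:~R <= (x + pi) / (2 * pi) < (m + 1)%:~R ->
  red2pi x = x - 2 * pi * m%:~R.
Proof. by move=> h; rewrite /red2pi (floor_def h). Qed.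

Lemma red0 x : - pi <= x < pi -> red2pi x = x.
Proof.
move=> /andP[h1 h2]; have pi2 := pi_ge2'.
rewrite (@red_gen x 0) ?mulr0 ?subr0 //.
rewrite add0r (_ : (0%:~R : R) = 0) // (_ : (1%:~R : R) = 1) //.
rewrite ler_pdivlMr ?ltr_pdivrMr ?mulr_gt0 //; try lra; apply/andP; split; lra.
Qed.

Lemma redP x : pi <= x < 3 * pi -> red2pi x = x - 2 * pi.
Proof.
move=> /andP[h1 h2]; have pi2 := pi_ge2'.
rewrite (@red_gen x 1) ?mulr1 //.
rewrite (_ : (1%:~R : R) = 1) // (_ : ((1 + 1)%:~R : R) = 2) //.
rewrite ler_pdivlMr ?ltr_pdivrMr ?mulr_gt0 //; try lra; apply/andP; split; lra.
Qed.

Lemma redN x : - (3 * pi) <= x < - pi -> red2pi x = x + 2 * pi.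
Proof.
move=> /andP[h1 h2]; have pi2 := pi_ge2'.
rewrite (@red_gen x (-1)); last first.
  rewrite (_ : ((-1)%:~R : R) = -1) // (_ : ((-1 + 1)%:~R : R) = 0) //.
  rewrite ler_pdivlMr ?ltr_pdivrMr ?mulr_gt0 //; try lra; apply/andP; split; lra.
rewrite (_ : ((-1)%:~R : R) = -1) //; lra.
Qed.


Lemma cont_mul3 (c : R) (g1 g2 : R -> R) :
  continuous g1 -> continuous g2 -> continuous (fun t => c * g1 t * g2 t).
Proof.
move=> c1 c2 t.
apply: (@continuousM _ _ (fun t => c * g1 t) g2); last exact: c2.
apply: (@continuousM _ _ (fun _ => c) g1); last exact: c1.
exact: cst_continuous.
Qed.

Section PhiS.
Variable K : R.
Hypothesis K0 : 0 <= K.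
Definition inner (t : R) := K * (1 - cos t).
Definition Phi (t : R) := expR (inner t).

Lemma is_derive_inner (t : R) : is_derive t (1:R) inner (K * sin t).
Proof.
rewrite /inner.
have H : is_derive t (1:R) (fun t => 1 - cos t) (0 - - sin t).
  apply: is_deriveB.
have := @is_deriveZ R R R (fun t => 1 - cos t) K t 1 _ H.
by rewrite sub0r opprK.
Qed.

Lemma is_derive_Phi (t : R) : is_derive t (1:R) Phi (K * sin t * Phi t).
Proof.
have := @is_derive1_comp R expR inner t (expR (inner t)) (K * sin t) _ (is_derive_inner t).
move=> H; rewrite (mulrC (K * sin t)); exact: H.
Qed.

Lemma Phi_cont : continuous Phi.
Proof.
move=> t; apply/differentiable_continuous/derivable1_diffP.
by case: (is_derive_Phi t).
Qed.

Lemma inner_bnd t : 0 <= inner t <= 2 * K.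
Proof.
rewrite /inner; have := cos_le1 t; have := cos_geN1 t; move=> h1 h2; have k0 := K0.
apply/andP; split; nra.
Qed.

Lemma Phi_ge1 t : 1 <= Phi t.
Proof.
have /andP[h _] := inner_bnd t.
by have := expR_ge1Dx (inner t); rewrite /Phi; lra.
Qed.

Lemma Phi_le t : Phi t <= expR (2 * K).
Proof. by rewrite /Phi ler_expR; have /andP[] := inner_bnd t. Qed.

Lemma Phi_gt0 t : 0 < Phi t.
Proof. exact: expR_gt0. Qed.

Lemma Phi_even t : Phi (- t) = Phi t.
Proof. by rewrite /Phi /inner cosN. Qed.

Lemma Phi_lip x y : `|Phi x - Phi y| <= K * expR (2 * K) * `|x - y|.
Proof.
apply: (@lip Phi (fun t => K * sin t * Phi t) _ is_derive_Phi) => t.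
rewrite normrM normrM (ger0_norm K0) (ger0_norm (ltW (Phi_gt0 t))).
move: (sin_max t) (Phi_le t) (Phi_gt0 t) (normr_ge0 (sin t)) => h1 h2 h3 h4.
rewrite -mulrA; apply: ler_wpM2l => //; nra.
Qed.
End PhiS.

Lemma ae_mono2 (P Q : R -> Prop) :
  (forall t, P t -> t != 0 -> Q t) ->
  {ae (@lebesgue_measure R), forall t, P t} ->
  {ae (@lebesgue_measure R), forall t, Q t}.
Proof.
move=> PQ hP.
have h0 : (@lebesgue_measure R).-negligible [set 0].
  by exists [set 0]; split => //; exact: lebesgue_measure_set1.
have := negligibleU hP h0.
apply: negligibleS => t /= nQ.
case: (eqVneq t 0) => [->|t0]; first by right.
by left => Pt; apply: nQ; apply: PQ.
Qed.

Lemma W_mid t : - pi <= t < pi -> Wm1 t = Wm1_base t.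
Proof. by move=> h; rewrite /Wm1 red0. Qed.

Lemma W_le1 t : Wm1 t <= 1.
Proof. exact: base_le1. Qed.

Lemma W_ge0 t : 0 <= Wm1 t.
Proof. exact: base_ge0. Qed.

Lemma W_farP t : pi <= t <= pi + 1/2 -> Wm1 t = cc.
Proof.
move=> /andP[h1 h2]; have pi2 := pi_ge2'.
rewrite /Wm1 redP; last by apply/andP; split; lra.
by rewrite base_big // ltr0_norm; lra.
Qed.

Lemma W_farN t : - pi - 1/2 <= t <= - pi -> Wm1 t = cc.
Proof.
move=> /andP[h1 h2]; have pi2 := pi_ge2'.
case: (eqVneq t (- pi)) => [->|tn].
  rewrite W_mid; last by apply/andP; split; lra.
  by rewrite base_big // normrN gtr0_norm; lra.
have h3 : t < - pi by rewrite lt_neqAle tn.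
rewrite /Wm1 redN; last by apply/andP; split; lra.
by rewrite base_big // gtr0_norm; lra.
Qed.

Lemma W_pos t : t != 0 -> - pi - 1/2 <= t <= pi + 1/2 -> 0 < Wm1 t.
Proof.
move=> t0 /andP[h1 h2]; have pi2 := pi_ge2'.
have := cc_bounds; rewrite /cc => /andP[c1 _].
have [h3|h3] := leP pi t.
  by rewrite W_farP ?cc; [rewrite /cc; lra|apply/andP; split].
have [h4|h4] := leP t (- pi).
  by rewrite W_farN; [rewrite /cc; lra|apply/andP; split].
rewrite W_mid; last by apply/andP; split; lra.
apply: base_pos => //; rewrite ler_norml; apply/andP; split; lra.
Qed.
End T.
Lemma int_bound (R : realType) (a b : R) (f h F : R -> R) :
  a < b -> continuous h -> (forall t, is_derive t (1:R) F (h t)) ->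
  (forall t, a <= t <= b -> 0 <= h t) ->
  measurable_fun `[a, b] f ->
  {ae (@lebesgue_measure R), forall t, t \in `[a, b] -> `|f t| <= h t} ->
  `|Rintegral lebesgue_measure `[a, b] f| <= F b - F a.
Proof.
move=> ab ch dF h0 mf hae.
have mD : measurable (`[a, b] : set R) by [].
have mfE := (measurable_realfun.measurable_EFinP _ f).2 mf.
have H1 := le_abse_integral lebesgue_measure mD mfE.
have H2 : (\int[lebesgue_measure]_(x in `[a, b]) (`|f x|)%:E <=
           \int[lebesgue_measure]_(x in `[a, b]) (h x)%:E)%E.
  apply: ae_ge0_le_integral.
  - by [].
  - by move=> t _ /=.
  - apply/measurable_realfun.measurable_EFinP; apply: measurableT_comp => //; exact: normr_measurable.
  - move=> t; rewrite /= in_itv /= => /andP[? ?]; rewrite lee_fin; apply: h0.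
    by apply/andP.
  - apply/measurable_realfun.measurable_EFinP; apply: measurable_funS (measurable_realfun.continuous_measurable_fun ch) => //.
  - case: hae => N [mN N0 HN]; exists N; split => //.
have H3 : (\int[lebesgue_measure]_(x in `[a, b]) (h x)%:E = (F b)%:E - (F a)%:E)%E.
  apply: continuous_FTC2 => //.
  - by apply: continuous_subspaceT.
  - split.
    + by move=> t _; case: (dF t).
    + apply: cvg_at_right_filter.
      exact/differentiable_continuous/derivable1_diffP; case: (dF a).
    + apply: cvg_at_left_filter.
      exact/differentiable_continuous/derivable1_diffP; case: (dF b).
  - by move=> t _; rewrite derive1E; case: (dF t).
rewrite H3 -EFinD in H2.
move: H1; rewrite /Rintegral.
case E : (\int[lebesgue_measure]_(x in `[a, b]) (EFin \o f) x)%E => [r| |] /= H1.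
- by have := le_trans H1 H2; rewrite lee_fin.
- by have := le_trans H1 H2.
- by have := le_trans H1 H2.
Qed.

Unset Implicit Arguments.

Theorem lemma3p3 (R : realType) (theta : R) :
  0 < theta < 1 ->
  exists delta0 : R, 0 < delta0 /\
  forall deltas : R, 0 < deltas -> deltas <= delta0 ->
  forall xs : R, `|xs| < deltas ->
  exists Wt : R -> R,
    (forall x, 0 < Wt x) /\ W1inf Wt /\
    (forall x, derivable Wt x 1 -> 0 <= sin x * derive1 Wt x) /\
    forall f : R -> R,
      measurable_fun `[- pi - xs, pi - xs] f ->
      forall M : R,
        {ae (@lebesgue_measure R), forall x, x \in `[- pi - xs, pi - xs] ->
            `|f x / (Wm1 x * Wt x)| <= M} ->
        {ae (@lebesgue_measure R), forall x, x \in `[- pi - xs, pi - xs] ->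
            `|sin x * int0 f x / (Wm1 x * Wt x)| <= theta * M}.
Proof.
move=> /andP[th0 th1].
pose K := 2 / theta.
have K0 : 0 < K by rewrite divr_gt0.
pose E := expR (2 * K).
have E1 : 1 <= E by have := expR_ge1Dx (2 * K); rewrite -/E; lra.
pose d0 := theta / (10 * E).
have d0pos : 0 < d0 by rewrite divr_gt0 // mulr_gt0 //; lra.
exists d0; split => // ds ds0 dsle xs hxs.
have d0le : d0 <= 1/10.
  rewrite /d0 ler_pdivrMr; [lra|].
  by apply: mulr_gt0; lra.
have xsb : `|xs| < d0 by apply: lt_le_trans dsle.
have [xs1 xs2] : - (1/10) < xs /\ xs < 1/10.
  by move: xsb; rewrite ltr_norml => /andP[]; lra.
have pi2 := @pi_ge2' R.
have pi4 := @pi_le4 R.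
exists (Phi K); split; [|split; [|split]].
- exact: Phi_gt0.
- split.
    exists E => x; rewrite ger0_norm; first exact: (Phi_le (ltW K0)).
    exact: ltW (Phi_gt0 _ _).
  by exists (K * E) => x y; exact: Phi_lip (ltW K0) x y.
- move=> x _; rewrite derive1E; case: (is_derive_Phi K x) => _ ->.
  rewrite (_ : sin x * (K * sin x * Phi K x) = (K * Phi K x) * (sin x ^+ 2)); last by ring.
  by apply: mulr_ge0; [apply: mulr_ge0; [lra| exact: ltW (Phi_gt0 _ _)] | exact: sqr_ge0].
move=> f mf M hae.
have [Mneg|M0] := ltP M 0.
  apply: (ae_mono2 _ hae) => x Px _ xI; exfalso.
  by have := Px xI; have := normr_ge0 (f x / (Wm1 x * Phi K x)); lra.
have Hg0 : {ae (@lebesgue_measure R), forall t, t \in `[- pi - xs, pi - xs] ->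
            `|f t| <= M * (Wm1 t * Phi K t)}.
  apply: (ae_mono2 _ hae) => t Pt t0 tI.
  have := Pt tI; move: tI; rewrite in_itv /= => /andP[tl tr].
  have D0 : 0 < Wm1 t * Phi K t.
    apply: mulr_gt0; last exact: Phi_gt0.
    apply: W_pos => //; apply/andP; split; lra.
  by rewrite normrM normfV (gtr0_norm D0) ler_pdivrMr.
apply: aeW => x xI.
have := xI; rewrite in_itv /= => /andP[xl xr].

have Phi0 : Phi K 0 = 1 by rewrite /Phi /inner cos0 subrr mulr0 expR0.
have PhiE t : Phi K t <= E := Phi_le (ltW K0) t.
have Phi1 t : 1 <= Phi K t := Phi_ge1 (ltW K0) t.
have mfS a b : - pi - xs <= a -> b <= pi - xs -> measurable_fun `[a, b] f.
  move=> h1 h2; apply: measurable_funS mf => //.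
  by move=> t /=; rewrite !in_itv /= => /andP[t1 t2]; apply/andP; split; lra.
have fin J : 0 < Wm1 x * Phi K x ->
    `|sin x| * `|J| <= theta * M * (Wm1 x * Phi K x) ->
    `|sin x * J / (Wm1 x * Phi K x)| <= theta * M.
  by move=> D0 h; rewrite normrM normfV (gtr0_norm D0) ler_pdivrMr // normrM.
have Wx0 : x != 0 -> 0 < Wm1 x * Phi K x.
  move=> x0; apply: mulr_gt0; last exact: Phi_gt0.
  by apply: W_pos => //; apply/andP; split; lra.
have [xneg|xpos|->] := ltgtP x 0; last first.
- by rewrite sin0 !mul0r normr0; apply: mulr_ge0 => //; lra.
-
  have J : int0 f x = Rintegral lebesgue_measure `[0, x] f by rewrite /int0 ifT // ltW.
  rewrite J; apply: fin; first by apply: Wx0; rewrite gt_eqF.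
  have [xpi|xpi] := ltP x pi.
  + have xx : 0 < x < pi by apply/andP.
    have bx0 := beta_ge0 xx.
    pose c := M * beta x / K.
    have c0 : 0 <= c by rewrite /c; apply: divr_ge0; [apply: mulr_ge0|lra].
    pose hh := fun t => M * beta x * sin t * Phi K t.
    have HA : {ae (@lebesgue_measure R), forall t, t \in `[0, x] -> `|f t| <= hh t}.
      apply: (ae_mono2 _ Hg0) => t Pt t0; rewrite in_itv /= => /andP[t1 t2].
      have tI : t \in `[- pi - xs, pi - xs] by rewrite in_itv /=; apply/andP; split; lra.
      apply: le_trans (Pt tI) _.
      rewrite /hh W_mid; last by apply/andP; split; lra.
      have -> : M * beta x * sin t * Phi K t = M * ((beta x * sin t) * Phi K t) by ring.
      apply: ler_wpM2l => //; apply: ler_wpM2r; first exact: ltW (Phi_gt0 _ _).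
      by apply: core1 => //; apply/andP.
    have key := @int_bound R 0 x f hh (fun t => c * Phi K t) xpos
      (@cont_mul3 R (M * beta x) sin (Phi K) (@continuous_sin R) (@Phi_cont R K)).
    have dF t : is_derive t (1:R) (fun t => c * Phi K t) (hh t).
      have -> : hh t = c * (K * sin t * Phi K t).
        by rewrite /hh /c; field; rewrite gt_eqF.
      exact: (@is_deriveZ R R R (Phi K) c t 1 _ (is_derive_Phi K t)).
    have h0 t : 0 <= t <= x -> 0 <= hh t.
      move=> /andP[t1 t2]; rewrite /hh; apply: mulr_ge0; last exact: ltW (Phi_gt0 _ _).
      apply: mulr_ge0; first exact: mulr_ge0.
      by apply: sin_ge0_pi; apply/andP; split; lra.
    have mfx : measurable_fun `[0, x] f by apply: mfS; lra.
    have {key} key := key dF h0 mfx HA.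
    rewrite Phi0 mulr1 in key.
    have sx : 0 < sin x by apply: sin_gt0_pi.
    rewrite (gtr0_norm sx).
    have h1 : `|Rintegral lebesgue_measure `[0, x] f| <= c * Phi K x by lra.
    apply: le_trans (ler_wpM2l (ltW sx) h1) _.
    have -> : sin x * (c * Phi K x) = (M * theta / 2 * Phi K x) * (sin x * beta x).
      by rewrite /c /K; field; rewrite gt_eqF.
    have -> : theta * M * (Wm1 x * Phi K x) = (M * theta / 2 * Phi K x) * (2 * Wm1 x).
      by field.
    apply: ler_wpM2l.
      apply: mulr_ge0; last exact: ltW (Phi_gt0 _ _).
      by have := mulr_ge0 M0 (ltW th0); lra.
    rewrite W_mid; last by apply/andP; split; lra.
    exact: core2.
  + have xb : x <= pi + 1/10 by lra.
    pose hh := fun t : R => M * E.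
    have E0 : 0 <= E by lra.
    have HB : {ae (@lebesgue_measure R), forall t, t \in `[0, x] -> `|f t| <= hh t}.
      apply: (ae_mono2 _ Hg0) => t Pt t0; rewrite in_itv /= => /andP[t1 t2].
      have tI : t \in `[- pi - xs, pi - xs] by rewrite in_itv /=; apply/andP; split; lra.
      apply: le_trans (Pt tI) _; rewrite /hh; apply: ler_wpM2l => //.
      rewrite -[E]mul1r; apply: ler_pM; [exact: W_ge0|exact: ltW (Phi_gt0 _ _)|exact: W_le1|exact: PhiE].
    have dF t : is_derive t (1:R) (fun t => M * E * t) (hh t).
      rewrite /hh -[X in is_derive _ _ _ X]mulr1.
      exact: (@is_deriveZ R R R id (M * E) t 1 1 (is_derive_id t 1)).
    have h0 t : 0 <= t <= x -> 0 <= hh t by move=> _; exact: mulr_ge0.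
    have mfx : measurable_fun `[0, x] f by apply: mfS; lra.
    have key := @int_bound R 0 x f hh (fun t => M * E * t) xpos
      (fun t => @cst_continuous _ _ (M * E) t) dF h0 mfx HB.
    rewrite mulr0 subr0 in key.
    have sxd : `|sin x| <= d0.
      have := sin_lip x pi; rewrite sinpi subr0 (ger0_norm (_ : 0 <= x - pi)); last lra.
      by move: xsb; rewrite ltr_norml => /andP[]; lra.
    have Jb : `|Rintegral lebesgue_measure `[0, x] f| <= M * E * 5.
      apply: le_trans key _; apply: ler_wpM2l; [exact: mulr_ge0|lra].
    apply: le_trans (ler_pM (normr_ge0 _) (normr_ge0 _) sxd Jb) _.
    have -> : d0 * (M * E * 5) = theta * M / 2.
      by rewrite /d0; field; rewrite gt_eqF //; lra.
    rewrite W_farP; last by apply/andP; split; lra.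
    have /andP[c1 _] := @cc_bounds R.
    have hp : 1/2 <= cc R * Phi K x.
      have c0 : 0 <= cc R by apply: (le_trans _ (c1)); rewrite divr_ge0.
      apply: (le_trans (c1)); rewrite -[X in X <= _]mulr1; apply: ler_wpM2l => //; exact: Phi1.
    have -> : theta * M / 2 = theta * M * (1/2) by ring.
    by apply: ler_wpM2l => //; apply: mulr_ge0 => //; lra.
- have J : int0 f x = - Rintegral lebesgue_measure `[x, 0] f.
    by rewrite /int0 ifN // -ltNge.
  rewrite J; apply: fin; first by apply: Wx0; rewrite lt_eqF.
  rewrite normrN.
  have [xpi|xpi] := ltP (- pi) x.
  + have xx : 0 < - x < pi by apply/andP; split; lra.
    have bx0 := beta_ge0 xx.
    pose c := M * beta (- x) / K.
    have c0 : 0 <= c by rewrite /c; apply: divr_ge0; [apply: mulr_ge0|lra].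
    pose hh := fun t => M * beta (- x) * (- sin t) * Phi K t.
    have HA : {ae (@lebesgue_measure R), forall t, t \in `[x, 0] -> `|f t| <= hh t}.
      apply: (ae_mono2 _ Hg0) => t Pt t0; rewrite in_itv /= => /andP[t1 t2].
      have tI : t \in `[- pi - xs, pi - xs] by rewrite in_itv /=; apply/andP; split; lra.
      apply: le_trans (Pt tI) _.
      rewrite /hh W_mid; last by apply/andP; split; lra.
      rewrite -(base_even t) -sinN.
      have -> : M * beta (- x) * sin (- t) * Phi K t = M * ((beta (- x) * sin (- t)) * Phi K t) by ring.
      apply: ler_wpM2l => //; apply: ler_wpM2r; first exact: ltW (Phi_gt0 _ _).
      by apply: core1 => //; apply/andP; split; lra.
    have cN : continuous (fun t : R => - sin t).
      by move=> t; apply: continuousN; exact: continuous_sin.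
    have key := @int_bound R x 0 f hh (fun t => - c * Phi K t) xneg
      (@cont_mul3 R (M * beta (- x)) (fun t => - sin t) (Phi K) cN (@Phi_cont R K)).
    have dF t : is_derive t (1:R) (fun t => - c * Phi K t) (hh t).
      have -> : hh t = - c * (K * sin t * Phi K t).
        by rewrite /hh /c; field; rewrite gt_eqF.
      exact: (@is_deriveZ R R R (Phi K) (- c) t 1 _ (is_derive_Phi K t)).
    have h0 t : x <= t <= 0 -> 0 <= hh t.
      move=> /andP[t1 t2]; rewrite /hh; apply: mulr_ge0; last exact: ltW (Phi_gt0 _ _).
      apply: mulr_ge0; first exact: mulr_ge0.
      by rewrite -sinN; apply: sin_ge0_pi; apply/andP; split; lra.
    have mfx : measurable_fun `[x, 0] f by apply: mfS; lra.
    have {key} key := key dF h0 mfx HA.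
    rewrite Phi0 mulr1 in key.
    have sx : 0 < sin (- x) by apply: sin_gt0_pi.
    have -> : `|sin x| = sin (- x) by rewrite -normrN -sinN gtr0_norm.
    have h1 : `|Rintegral lebesgue_measure `[x, 0] f| <= c * Phi K x by lra.
    apply: le_trans (ler_wpM2l (ltW sx) h1) _.
    have -> : sin (- x) * (c * Phi K x) = (M * theta / 2 * Phi K x) * (sin (- x) * beta (- x)).
      by rewrite /c /K; field; rewrite gt_eqF.
    have -> : theta * M * (Wm1 x * Phi K x) = (M * theta / 2 * Phi K x) * (2 * Wm1 x).
      by field.
    apply: ler_wpM2l.
      apply: mulr_ge0; last exact: ltW (Phi_gt0 _ _).
      by have := mulr_ge0 M0 (ltW th0); lra.
    rewrite W_mid; last by apply/andP; split; lra.
    rewrite -base_even; exact: core2.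
  + have xb : - pi - 1/10 <= x by lra.
    pose hh := fun t : R => M * E.
    have E0 : 0 <= E by lra.
    have HB : {ae (@lebesgue_measure R), forall t, t \in `[x, 0] -> `|f t| <= hh t}.
      apply: (ae_mono2 _ Hg0) => t Pt t0; rewrite in_itv /= => /andP[t1 t2].
      have tI : t \in `[- pi - xs, pi - xs] by rewrite in_itv /=; apply/andP; split; lra.
      apply: le_trans (Pt tI) _; rewrite /hh; apply: ler_wpM2l => //.
      rewrite -[E]mul1r; apply: ler_pM; [exact: W_ge0|exact: ltW (Phi_gt0 _ _)|exact: W_le1|exact: PhiE].
    have dF t : is_derive t (1:R) (fun t => M * E * t) (hh t).
      rewrite /hh -[X in is_derive _ _ _ X]mulr1.
      exact: (@is_deriveZ R R R id (M * E) t 1 1 (is_derive_id t 1)).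
    have h0 t : x <= t <= 0 -> 0 <= hh t by move=> _; exact: mulr_ge0.
    have mfx : measurable_fun `[x, 0] f by apply: mfS; lra.
    have key := @int_bound R x 0 f hh (fun t => M * E * t) xneg
      (fun t => @cst_continuous _ _ (M * E) t) dF h0 mfx HB.
    rewrite mulr0 sub0r in key.
    have sxd : `|sin x| <= d0.
      have := sin_lip x (- pi); rewrite sinN sinpi oppr0 subr0 opprK.
      rewrite (ler0_norm (_ : x + pi <= 0)); last lra.
      by move: xsb; rewrite ltr_norml => /andP[]; lra.
    have Jb : `|Rintegral lebesgue_measure `[x, 0] f| <= M * E * 5.
      apply: le_trans key _; rewrite -mulrN; apply: ler_wpM2l; [exact: mulr_ge0|lra].
    apply: le_trans (ler_pM (normr_ge0 _) (normr_ge0 _) sxd Jb) _.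
    have -> : d0 * (M * E * 5) = theta * M / 2.
      by rewrite /d0; field; rewrite gt_eqF //; lra.
    rewrite W_farN; last by apply/andP; split; lra.
    have /andP[c1 _] := @cc_bounds R.
    have hp : 1/2 <= cc R * Phi K x.
      have c0 : 0 <= cc R by apply: (le_trans _ (c1)); rewrite divr_ge0.
      apply: (le_trans (c1)); rewrite -[X in X <= _]mulr1; apply: ler_wpM2l => //; exact: Phi1.
    have -> : theta * M / 2 = theta * M * (1/2) by ring.
    by apply: ler_wpM2l => //; apply: mulr_ge0 => //; lra.
Qed.
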